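(* Let $k>0$ and $g(u;a)=u(1-u)(u-a)$. Define $$a_*^-(k)=1-\frac{2}{\sqrt{4k+1}+1},\qquad a_1^-(k)=\max\Big\{1-\frac{2}{2\sqrt k+1},0\Big\},$$ and for $0\le a\le a_*^-(k)$, $$d^-_{\min}(a,k)=\frac{2a^2k-a+2k-2(a+1)\sqrt k\sqrt{ka^2-a(2k+1)+k}}{(4k+1)^2},$$ $$d^-_{\max}(a,k)=\begin{cases}\dfrac{(1-a)^2}{4}, & a\in[0,a_1^-(k)),\\[2mm] \dfrac{2a^2k-a+2k+2(a+1)\sqrt k\sqrt{ka^2-a(2k+1)+k}}{(4k+1)^2}, & a\in[a_1^-(k),a_*^-(k)].\end{cases}$$ Then: (i) $d^-_{\min},d^-_{\max}\in C([0,a_*^-(k)]\times(0,\infty);\mathbb R)$ and $0\le d^-_{\min}(a,k)\le d^-_{\max}(a,k)\le d^-(a)$ for all $a\in[0,a_*^-(k)]$, where $d^-(a)=\max_{y\in(a,1)}g(y;a)/y$; (ii) $d^-_{\max}(a_*^-(k),k)=d^-_{\min}(a_*^-(k),k)$; (iii) $$\mathcal D^-(k)=\{(a,d)\in\mathcal H:\ a<a_*^-(k),\ d^-_{\min}(a,k)<d<d^-_{\max}(a,k)\}.$$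
   Context: Let $\mathcal H=(0,1)\times(0,\infty)$. For $k>0$, $a\in(0,1)$, $A\in(0,1)$ let $$d^\diamond(A;a)=\inf\{d>0:\ d(k+1)(A-v)-g(A;a)\ge -g(v;a)\ \text{for all }v\in[0,A]\},$$ and $$\mathcal D^-(k)=\Big\{(a,d)\in\mathcal H:\ d^\diamond(A;a)<d<\frac{g(A;a)}{A}\ \text{for some }A\in(a,1)\Big\},$$ with $g$ the cubic above. *)

(* Defs.v *)
From Stdlib Require Import Reals Lra.
From Coquelicot Require Import Coquelicot.
Open Scope R_scope.

Definition g (u a : R) : R := u * (1 - u) * (u - a).

(* d^-(a) = max_{y in (a,1)} g(y;a)/y, taken as the supremum (it is attained). *)
Definition dminus (a : R) : R :=
  real (Lub_Rbar (fun z => exists y, a < y < 1 /\ z = g y a / y)).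

Definition ddiamond (k A a : R) : Rbar :=
  Glb_Rbar (fun d => 0 < d /\
    forall v, 0 <= v <= A -> d * (k + 1) * (A - v) - g A a >= - g v a).

Definition inH (a d : R) : Prop := 0 < a < 1 /\ 0 < d.

Definition Dset_minus (k a d : R) : Prop :=
  inH a d /\ exists A, a < A < 1 /\ Rbar_lt (ddiamond k A a) (Finite d) /\ d < g A a / A.

Definition a_star (k : R) : R := 1 - 2 / (sqrt (4 * k + 1) + 1).
Definition a_one (k : R) : R := Rmax (1 - 2 / (2 * sqrt k + 1)) 0.

Definition dmin (a k : R) : R :=
  (2 * a ^ 2 * k - a + 2 * k
     - 2 * (a + 1) * sqrt k * sqrt (k * a ^ 2 - a * (2 * k + 1) + k))
  / (4 * k + 1) ^ 2.

Definition dmax (a k : R) : R :=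
  if Rlt_dec a (a_one k) then (1 - a) ^ 2 / 4
  else (2 * a ^ 2 * k - a + 2 * k
     + 2 * (a + 1) * sqrt k * sqrt (k * a ^ 2 - a * (2 * k + 1) + k))
  / (4 * k + 1) ^ 2.

Definition dom_ak (a k : R) : Prop := 0 < k /\ 0 <= a <= a_star k.

Definition cont_on2 (S : R -> R -> Prop) (f : R -> R -> R) : Prop :=
  forall a k, S a k -> forall eps, 0 < eps -> exists delta, 0 < delta /\
    forall a' k', S a' k' -> Rabs (a' - a) < delta -> Rabs (k' - k) < delta ->
      Rabs (f a' k' - f a k) < eps.

(* Main.v *)
Require Import Defs.
From Stdlib Require Import Reals Lra Psatz.
From Coquelicot Require Import Coquelicot.
Open Scope R_scope.
Definition hh a A := (1 - A) * (A - a).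
Definition S2 a A := ((1+a) - A) * (3*A + (1+a)) / 4 - a.
Definition rr a k := k * a ^ 2 - a * (2 * k + 1) + k.
Definition tt a k := sqrt k * sqrt (rr a k).
Definition Am a k := ((1+a)*(2*k+1) - 2 * tt a k)/(4*k+1).
Definition Ap a k := ((1+a)*(2*k+1) + 2 * tt a k)/(4*k+1).
Definition F2 a k := (2 * a ^ 2 * k - a + 2 * k
     + 2 * (a + 1) * sqrt k * sqrt (k * a ^ 2 - a * (2 * k + 1) + k))
  / (4 * k + 1) ^ 2.

Lemma tt_sq a k : 0 <= k -> 0 <= rr a k -> tt a k ^ 2 = k * rr a k /\ 0 <= tt a k.
Proof. intros. unfold tt. split.
  rewrite Rpow_mult_distr, !pow2_sqrt; auto.
  apply Rmult_le_pos; apply sqrt_pos. Qed.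

Lemma hroot_p a k t : t ^ 2 = k * rr a k -> 0 < k ->
  hh a (((1+a)*(2*k+1) + 2 * t)/(4*k+1)) = (2 * a ^ 2 * k - a + 2 * k - 2 * (a + 1) * t) / (4 * k + 1) ^ 2.
Proof. intros T Hk.
  set (X := 2*k - a*(2*k+1)). set (Y := 2*k+1-2*a*k).
  transitivity ((X - 2*t)*(Y+2*t)/(4*k+1)^2). unfold hh, X, Y. field. lra.
  f_equal. transitivity (X*Y + 2*t*(X-Y) - 4*t^2). ring. rewrite T. unfold X, Y, rr. ring.
Qed.
Lemma hroot_m a k t : t ^ 2 = k * rr a k -> 0 < k ->
  hh a (((1+a)*(2*k+1) - 2 * t)/(4*k+1)) = (2 * a ^ 2 * k - a + 2 * k + 2 * (a + 1) * t) / (4 * k + 1) ^ 2.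
Proof. intros T Hk.
  set (X := 2*k - a*(2*k+1)). set (Y := 2*k+1-2*a*k).
  transitivity ((X + 2*t)*(Y-2*t)/(4*k+1)^2). unfold hh, X, Y. field. lra.
  f_equal. transitivity (X*Y - 2*t*(X-Y) - 4*t^2). ring. rewrite T. unfold X, Y, rr. ring.
Qed.
Lemma hAp a k : 0 < k -> 0 <= rr a k -> hh a (Ap a k) = dmin a k.
Proof. intros Hk Hr. destruct (tt_sq a k) as [T1 T2]; try lra.
  unfold Ap. rewrite (hroot_p a k); auto. unfold dmin, tt, rr. f_equal. ring. Qed.
Lemma hAm a k : 0 < k -> 0 <= rr a k -> hh a (Am a k) = F2 a k.
Proof. intros Hk Hr. destruct (tt_sq a k) as [T1 T2]; try lra.
  unfold Am. rewrite (hroot_m a k); auto. unfold F2, tt, rr. f_equal. ring. Qed.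

Lemma Pfact a k A : 0 < k -> 0 <= rr a k ->
  S2 a A - (k+1) * hh a A = (k + /4) * (A - Am a k) * (A - Ap a k).
Proof. intros Hk Hr. destruct (tt_sq a k) as [T1 T2]; try lra.
  unfold Am, Ap. set (t := tt a k) in *. unfold S2, hh.
  apply Rminus_diag_uniq.
  transitivity ((t^2 - k * rr a k) / (4*k+1)). unfold rr. field. lra.
  rewrite T1. field. lra. Qed.

Lemma Pdisc a k A : 0 < k ->
  4 * (k + /4) * (S2 a A - (k+1) * hh a A) = (2*(k+/4)*A - (1+a)*(k+/2))^2 - k * rr a k.
Proof. intros. unfold S2, hh, rr. field. Qed.
Section C.
Context {U : UniformSpace}.
Lemma cPlus (f g : U -> R) p : continuous f p -> continuous g p -> continuous (fun x => f x + g x) p.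
Proof. intros; apply (continuous_plus f g); auto. Qed.
Lemma cMult (f g : U -> R) p : continuous f p -> continuous g p -> continuous (fun x => f x * g x) p.
Proof. intros; apply (continuous_mult f g); auto. Qed.
Lemma cOpp (f : U -> R) p : continuous f p -> continuous (fun x => - f x) p.
Proof. intros; apply (continuous_opp f); auto. Qed.
Lemma cMinus (f g : U -> R) p : continuous f p -> continuous g p -> continuous (fun x => f x - g x) p.
Proof. intros; apply cPlus; auto; apply cOpp; auto. Qed.
Lemma cSqrt (f : U -> R) p : continuous f p -> continuous (fun x => sqrt (f x)) p.
Proof. intros; apply (continuous_comp f sqrt); auto; apply continuous_sqrt. Qed.
Lemma cInv (f : U -> R) p : continuous f p -> f p <> 0 -> continuous (fun x => / (f x)) p.
Proof. intros; apply (continuous_comp f Rinv); auto; apply continuous_Rinv; auto. Qed.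
Lemma cAbs (f : U -> R) p : continuous f p -> continuous (fun x => Rabs (f x)) p.
Proof. intros; apply (continuous_comp f Rabs); auto; apply continuous_Rabs. Qed.
Lemma cConst (c : R) p : continuous (fun _ : U => c) p.
Proof. apply continuous_const. Qed.
Lemma cDiv (f g : U -> R) p : continuous f p -> continuous g p -> g p <> 0 -> continuous (fun x => f x / g x) p.
Proof. intros; apply cMult; auto; apply cInv; auto. Qed.
Lemma cPow (f : U -> R) p n : continuous f p -> continuous (fun x => f x ^ n) p.
Proof. intros H; induction n; simpl. apply cConst. apply cMult; auto. Qed.
Lemma cMax (f g : U -> R) p : continuous f p -> continuous g p -> continuous (fun x => Rmax (f x) (g x)) p.
Proof. intros. 
  assert (E: forall x, Rmax (f x) (g x) = (f x + g x + Rabs (f x - g x)) / 2).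
  { intros x; unfold Rmax; destruct (Rle_dec (f x) (g x)); [rewrite Rabs_left1 by lra | rewrite Rabs_right by lra]; lra. }
  eapply continuous_ext. intros x; symmetry; apply E.
  apply cDiv; [| apply cConst | lra]. apply cPlus; [apply cPlus|apply cAbs; apply cMinus]; auto.
Qed.
End C.
Lemma cFst (a k : R) : continuous (fun p : R*R => fst p) (a,k).
Proof. apply continuous_fst. Qed.
Lemma cSnd (a k : R) : continuous (fun p : R*R => snd p) (a,k).
Proof. apply continuous_snd. Qed.

Lemma cont_eps (G : R*R -> R) a k : continuous G (a,k) -> forall eps, 0 < eps -> exists delta, 0 < delta /\
    forall a' k', Rabs (a' - a) < delta -> Rabs (k' - k) < delta -> Rabs (G (a',k') - G (a,k)) < eps.
Proof.
  intros H eps He.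
  assert (L := H _ (locally_ball (G (a,k)) (mkposreal eps He))).
  destruct L as [d Hd]. exists d. split. apply cond_pos.
  intros a' k' H1 H2. apply (Hd (a',k')). split; simpl; auto.
Qed.
Lemma s_facts k : 0 < k -> 1 < sqrt (4*k+1) /\ sqrt (4*k+1) ^ 2 = 4*k+1 /\
   a_star k = (sqrt (4*k+1) - 1)/(sqrt (4*k+1) + 1).
Proof. intros Hk. assert (H1: 1 < sqrt (4*k+1)).
  { assert (sqrt 1 < sqrt (4*k+1)) by (apply sqrt_lt_1; lra). rewrite sqrt_1 in H. exact H. }
  split; [exact H1|]. split; [apply pow2_sqrt; lra|].
  unfold a_star. field; lra. Qed.

Lemma rr_fact k a : 0 < k -> 4 * rr a k =
  ((sqrt (4*k+1) - 1)*a - (sqrt (4*k+1) + 1)) * ((sqrt (4*k+1) + 1)*a - (sqrt (4*k+1) - 1)).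
Proof. intros Hk. destruct (s_facts k Hk) as [H1 [H2 _]]. set (s := sqrt (4*k+1)) in *.
  transitivity (((s-1)*a - (s+1))*((s+1)*a - (s-1)) + (4*k+1 - s^2)*(1-a)^2).
  unfold rr; ring. rewrite H2. ring. Qed.

Lemma astar_bounds k : 0 < k -> 0 < a_star k < 1.
Proof. intros Hk. destruct (s_facts k Hk) as [H1 [H2 H3]]. rewrite H3.
  split. apply Rdiv_lt_0_compat; lra. apply (Rmult_lt_reg_r (sqrt (4*k+1) + 1)); [lra|]. field_simplify; lra. Qed.

Lemma lt_astar k a : 0 < k -> (a < a_star k <-> a * (sqrt (4*k+1) + 1) < sqrt (4*k+1) - 1).
Proof. intros Hk. destruct (s_facts k Hk) as [H1 [H2 H3]]. rewrite H3.
  set (s := sqrt (4*k+1)) in *. split; intros H.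
  apply (Rmult_lt_compat_r (s+1)) in H; [|lra]. field_simplify in H; lra.
  apply (Rmult_lt_reg_r (s+1)); [lra|]. field_simplify; lra. Qed.

Lemma rpos k a : 0 < k -> 0 <= a < a_star k -> 0 < rr a k.
Proof. intros Hk Ha. pose proof (astar_bounds k Hk).
  destruct (s_facts k Hk) as [H1 [H2 H3]]. assert (Ha' := proj1 (lt_astar k a Hk) (proj2 Ha)).
  pose proof (rr_fact k a Hk). set (s := sqrt (4*k+1)) in *. nra. Qed.

Lemma rr_astar k : 0 < k -> rr (a_star k) k = 0.
Proof. intros Hk. pose proof (rr_fact k (a_star k) Hk). destruct (s_facts k Hk) as [H1 [H2 H3]].
    rewrite H3 in H. set (s := sqrt (4*k+1)) in *. rewrite H3.
    replace ((s + 1) * ((s - 1) / (s + 1)) - (s - 1)) with 0 in H by (field; lra).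
    lra. Qed.

Lemma rnn k a : 0 < k -> 0 <= a <= a_star k -> 0 <= rr a k.
Proof. intros Hk Ha. destruct (Req_dec a (a_star k)) as [E|E].
  - rewrite E, rr_astar; lra.
  - left. apply rpos; auto. lra. Qed.

Lemma rneg k a : 0 < k -> a_star k <= a < 1 -> rr a k <= 0.
Proof. intros Hk Ha. destruct (s_facts k Hk) as [H1 [H2 H3]].
  assert (Hb: ~ (a * (sqrt (4*k+1) + 1) < sqrt (4*k+1) - 1)).
  { rewrite <- lt_astar; lra. }
  pose proof (rr_fact k a Hk). set (s := sqrt (4*k+1)) in *.
  assert (X1: (s+1)*a - (s-1) >= 0) by lra.
  assert (X2: (s-1)*a - (s+1) < 0) by nra.
  assert (X3: ((s-1)*a - (s+1))*((s+1)*a - (s-1)) <= 0)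
  by nra. lra. Qed.

Lemma c16 a k : (1+a)^2 - 16 * k * rr a k = (1 + 4*k) * (4*a - (4*k-1)*(1-a)^2).
Proof. unfold rr; ring. Qed.

Lemma aone_ge k a : 0 < k -> 0 <= a <= 1 -> ~ (a < a_one k) -> 16 * k * rr a k <= (1+a)^2.
Proof. intros Hk Ha Hn.
  assert (0 <= (1+a)^2 - 16*k*rr a k); [|lra]. rewrite c16.
  apply Rmult_le_pos; [lra|].
  unfold a_one in Hn. 
  assert (Hp: sqrt k ^ 2 = k) by (apply pow2_sqrt; lra). pose proof (sqrt_pos k).
  set (p := sqrt k) in *.
  assert (a >= 1 - 2/(2*p+1)). { pose proof (Rmax_l (1 - 2 / (2 * p + 1)) 0). lra. }
  assert (a*(2*p+1) >= 2*p - 1).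
  { apply Rge_le in H0. apply (Rmult_le_compat_r (2*p+1)) in H0; [|lra]. field_simplify in H0; lra. }
  replace (4*k - 1) with ((2*p-1)*(2*p+1)) by (rewrite <- Hp; ring).
  destruct (Rle_dec (2*p) 1). nra. 
  assert ((1-a)*(2*p+1) <= 2) by nra.
  assert (0 <= (1-a)*(2*p+1)) by nra.
  assert (X: ((1-a)*(2*p+1))^2 <= 4) by nra.
  assert (Y: 0 <= (2*p+1) * (4 * a - (2 * p - 1) * (2 * p + 1) * (1 - a) ^ 2)).
  { replace ((2*p+1) * (4 * a - (2 * p - 1) * (2 * p + 1) * (1 - a) ^ 2)) with
      (4*(a*(2*p+1)) - (2*p-1)*((1-a)*(2*p+1))^2) by ring. nra. }
  apply (Rmult_le_reg_l (2*p+1)); lra. Qed.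

Lemma aone_lt k a : 0 < k -> 0 <= a <= 1 -> a < a_one k -> (1+a)^2 < 16 * k * rr a k.
Proof. intros Hk Ha Hl.
  assert (0 < 16*k*rr a k - (1+a)^2); [|lra].
  replace (16*k*rr a k - (1+a)^2) with (- ((1+a)^2 - 16 * k * rr a k)) by ring.
  rewrite c16.
  unfold a_one in Hl.
  assert (Hp: sqrt k ^ 2 = k) by (apply pow2_sqrt; lra). pose proof (sqrt_pos k).
  set (p := sqrt k) in *.
  assert (Hx: a < 1 - 2/(2*p+1)).
  { unfold Rmax in Hl. destruct (Rle_dec (1 - 2 / (2 * p + 1)) 0); lra. }
  assert (a*(2*p+1) < 2*p - 1).
  { apply (Rmult_lt_compat_r (2*p+1)) in Hx; [|lra]. field_simplify in Hx; lra. }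
  replace (4*k - 1) with ((2*p-1)*(2*p+1)) by (rewrite <- Hp; ring).
  assert (Hp1: 2*p - 1 > 0) by nra.
  assert (X0: (1-a)*(2*p+1) > 2) by nra.
  assert (X: ((1-a)*(2*p+1))^2 > 4) by nra.
  assert (Y: 0 > (2*p+1) * (4 * a - (2 * p - 1) * (2 * p + 1) * (1 - a) ^ 2)).
  { replace ((2*p+1) * (4 * a - (2 * p - 1) * (2 * p + 1) * (1 - a) ^ 2)) with
      (4*(a*(2*p+1)) - (2*p-1)*((1-a)*(2*p+1))^2) by ring. nra. }
  assert (Z: (4 * a - (2 * p - 1) * (2 * p + 1) * (1 - a) ^ 2) < 0).
  { destruct (Rlt_dec (4 * a - (2 * p - 1) * (2 * p + 1) * (1 - a) ^ 2) 0); auto. nra. }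
  nra. Qed.

Lemma astar_ge_aone k : 0 < k -> ~ (a_star k < a_one k).
Proof. intros Hk. pose proof (astar_bounds k Hk).
  destruct (s_facts k Hk) as [H1 [H2 H3]].
  assert (Hp: sqrt k ^ 2 = k) by (apply pow2_sqrt; lra). pose proof (sqrt_pos k).
  assert (1 - 2 / (2 * sqrt k + 1) < a_star k).
  { unfold a_star. set (s := sqrt (4*k+1)) in *. set (p := sqrt k) in *.
    assert (2*p < s) by nra.
    assert (2/(s+1) < 2/(2*p+1)).
    { unfold Rdiv. apply Rmult_lt_compat_l; [lra|]. apply Rinv_lt_contravar; nra. }
    lra. }
  unfold a_one. apply Rle_not_lt. apply Rmax_lub; lra. Qed.

Lemma hh_dec a x y : (1+a)/2 <= x <= y -> hh a y <= hh a x.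
Proof. intros. unfold hh. nra. Qed.
Lemma hh_sdec a x y : (1+a)/2 <= x < y -> hh a y < hh a x.
Proof. intros. unfold hh. nra. Qed.
Lemma hh_max a x : hh a x <= (1-a)^2/4.
Proof. assert (E: (1-a)^2/4 - hh a x = (x - (1+a)/2)^2) by (unfold hh; field).
  pose proof (pow2_ge_0 (x - (1+a)/2)). lra. Qed.
Lemma S2_cmp a x y : (1+a)/3 <= y -> 2*(1+a)/3 - y <= x <= y -> S2 a y <= S2 a x.
Proof. intros. unfold S2. nra. Qed.
Lemma S2_form a x : S2 a x = (1+a)^2/3 - a - 3/4 * (x - (1+a)/3)^2.
Proof. unfold S2. field. Qed.

Lemma Ap_ge k a : 0 < k -> 0 <= rr a k -> 0 <= a -> (1+a)/2 <= Ap a k.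
Proof. intros Hk Hr Ha. destruct (tt_sq a k) as [T1 T2]; try lra. unfold Ap.
  apply (Rmult_le_reg_r (4*k+1)); [lra|]. field_simplify; [|lra]. nra. Qed.

Lemma Am_ge k a : 0 < k -> 0 <= a <= 1 -> ~ (a < a_one k) -> 0 <= rr a k -> (1+a)/2 <= Am a k.
Proof. intros Hk Ha Hn Hr. pose proof (aone_ge k a Hk Ha Hn).
  destruct (tt_sq a k) as [T1 T2]; try lra.
  assert (4 * tt a k <= 1 + a) by nra.
  unfold Am. apply (Rmult_le_reg_r (4*k+1)); [lra|]. field_simplify; [|lra]. nra. Qed.

Lemma Am_lt k a : 0 < k -> 0 <= a <= 1 -> a < a_one k -> 0 <= rr a k -> Am a k < (1+a)/2.
Proof. intros Hk Ha Hn Hr. pose proof (aone_lt k a Hk Ha Hn).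
  destruct (tt_sq a k) as [T1 T2]; try lra.
  assert (4 * tt a k > 1 + a) by nra.
  unfold Am. apply (Rmult_lt_reg_r (4*k+1)); [lra|]. field_simplify; [|lra]. nra. Qed.

Lemma Am_le_Ap k a : 0 < k -> 0 <= rr a k -> Am a k <= Ap a k.
Proof. intros Hk Hr. destruct (tt_sq a k) as [T1 T2]; try lra. unfold Am, Ap.
  apply (Rmult_le_reg_r (4*k+1)); [lra|]. field_simplify; [|lra|lra]. nra. Qed.

Lemma AmAp_sum k a : 0 < k -> 0 <= a -> 2*(1+a)/3 <= Am a k + Ap a k.
Proof. intros Hk Ha. unfold Am, Ap.
  apply (Rmult_le_reg_r (4*k+1)); [lra|]. field_simplify; [|lra]. nra. Qed.

Lemma dmax_else k a : ~ (a < a_one k) -> dmax a k = F2 a k.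
Proof. intros H. unfold dmax. destruct (Rlt_dec a (a_one k)); [contradiction|reflexivity]. Qed.
Lemma dmax_then k a : a < a_one k -> dmax a k = (1-a)^2/4.
Proof. intros H. unfold dmax. destruct (Rlt_dec a (a_one k)); [reflexivity|contradiction]. Qed.

Lemma core_fwd k a d A : 0 < k -> 0 < a < 1 -> 0 < d -> a < A < 1 ->
  S2 a A < (k+1)*d -> d < hh a A -> a < a_star k /\ dmin a k < d /\ d < dmax a k.
Proof. intros Hk Ha Hd HA HS Hh.
  assert (Has: a < a_star k).
  { destruct (Rlt_dec a (a_star k)) as [|Hn]; auto. exfalso.
    assert (rr a k <= 0) by (apply rneg; lra).
    pose proof (Pdisc a k A Hk).
    pose proof (pow2_ge_0 (2 * (k + / 4) * A - (1 + a) * (k + / 2))).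
    assert (0 <= S2 a A - (k + 1) * hh a A).
    { apply (Rmult_le_reg_l (4 * (k + /4))). lra. rewrite Rmult_0_r. nra. }
    nra. }
  split; auto.
  assert (Hr: 0 < rr a k) by (apply rpos; lra).
  pose proof (Pfact a k A Hk ltac:(lra)) as PF.
  pose proof (Am_le_Ap k a Hk ltac:(lra)).
  assert (HP: (k + /4) * (A - Am a k) * (A - Ap a k) < 0) by nra.
  assert (HA1: Am a k < A < Ap a k).
  { assert ((A - Am a k) * (A - Ap a k) < 0).
    { apply (Rmult_lt_reg_l (k + /4)). lra. rewrite Rmult_0_r, <- Rmult_assoc. exact HP. }
    nra. }
  split.
  - pose proof (Pfact a k (Ap a k) Hk ltac:(lra)) as PF2.
    replace ((Ap a k - Ap a k)) with 0 in PF2 by ring. rewrite Rmult_0_r in PF2.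
    rewrite (hAp a k Hk ltac:(lra)) in PF2.
    pose proof (Ap_ge k a Hk ltac:(lra) ltac:(lra)).
    pose proof (AmAp_sum k a Hk ltac:(lra)).
    assert (S2 a (Ap a k) <= S2 a A) by (apply S2_cmp; lra).
    nra.
  - destruct (Rlt_dec a (a_one k)) as [Hl|Hn].
    + rewrite dmax_then by auto. pose proof (hh_max a A). lra.
    + rewrite dmax_else by auto. rewrite <- hAm by lra.
      pose proof (Am_ge k a Hk ltac:(lra) Hn ltac:(lra)).
      pose proof (hh_dec a (Am a k) A ltac:(lra)). lra.
Qed.

Lemma dmax_le k a : 0 < k -> 0 <= a <= a_star k -> dmax a k <= (1-a)^2/4.
Proof. intros Hk Ha. destruct (Rlt_dec a (a_one k)) as [Hl|Hn].
  + rewrite dmax_then by auto. lra.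
  + rewrite dmax_else by auto. rewrite <- hAm; [apply hh_max|lra|apply rnn; lra]. Qed.

Lemma sqrt_facts x : 0 <= x -> 0 <= sqrt x /\ sqrt x ^ 2 = x.
Proof. intros. split. apply sqrt_pos. apply pow2_sqrt; auto. Qed.

Lemma core_bwd k a d : 0 < k -> 0 < a < a_star k -> 0 < d -> dmin a k < d -> d < dmax a k ->
  exists A, a < A < 1 /\ S2 a A < (k+1)*d /\ d < hh a A.
Proof. intros Hk Ha Hd H1 H2.
  pose proof (astar_bounds k Hk).
  assert (Hr: 0 < rr a k) by (apply rpos; lra).
  pose proof (dmax_le k a Hk ltac:(lra)).
  set (D1 := (1-a)^2 - 4*d).
  destruct (sqrt_facts D1) as [Q1 Q2]. unfold D1; lra.
  assert (Q3: 0 < sqrt D1) by (apply sqrt_lt_R0; unfold D1; lra).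
  set (be := (1 + a + sqrt D1)/2).
  assert (Hbe: hh a be = d).
  { unfold hh, be. transitivity (((1-a)^2 - sqrt D1 ^ 2)/4). field. rewrite Q2. unfold D1. field. }
  assert (Hb1: be < 1).
  { unfold be. assert (sqrt D1 < 1 - a); [|lra].
    destruct (Rlt_dec (sqrt D1) (1-a)); auto.
    assert (E: D1 = (1-a)^2 - 4*d) by reflexivity.
    assert ((1-a)^2 <= sqrt D1 ^2). { apply pow_incr. lra. } lra. }
  assert (Hb2: (1+a)/2 < be) by (unfold be; lra).
  pose proof (Ap_ge k a Hk ltac:(lra) ltac:(lra)).
  assert (Hb3: be < Ap a k).
  { destruct (Rlt_dec be (Ap a k)); auto.
    pose proof (hh_dec a (Ap a k) be ltac:(lra)). rewrite hAp in H4 by lra. lra. }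
  assert (Hb4: Am a k < be).
  { destruct (Rlt_dec a (a_one k)) as [Hl|Hn].
    - pose proof (Am_lt k a Hk ltac:(lra) Hl ltac:(lra)). lra.
    - pose proof (Am_ge k a Hk ltac:(lra) Hn ltac:(lra)).
      rewrite dmax_else in H2 by auto. rewrite <- hAm in H2 by lra.
      destruct (Rlt_dec (Am a k) be); auto.
      pose proof (hh_dec a be (Am a k) ltac:(lra)). lra. }
  assert (HSb: S2 a be < (k+1)*d).
  { pose proof (Pfact a k be Hk ltac:(lra)). rewrite Hbe in H4.
    assert ((k + / 4) * (be - Am a k) * (be - Ap a k) < 0).
    { assert (0 < (k + / 4) * (be - Am a k)) by (apply Rmult_lt_0_compat; lra). nra. }
    lra. }
  set (D2 := 4*(1+a)^2 - 12*a - 12*(k+1)*d).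
  assert (KD: (k+1)*d = (1+a)^2/3 - a - D2/12) by (unfold D2; field).
  set (ga := (1 + a + sqrt D2)/3).
  pose proof (sqrt_pos D2).
  assert (Hg: forall x, (1+a)/2 <= x -> ga < x -> S2 a x < (k+1)*d).
  { intros x Hx1 Hx2. rewrite S2_form, KD.
    assert (D2/9 < (x - (1+a)/3)^2). 2:{ lra. }
    destruct (Rle_dec D2 0).
    - assert (0 < (x - (1+a)/3)^2); [|lra]. apply pow_lt. lra.
    - rewrite <- (pow2_sqrt D2) by lra. unfold ga in Hx2.
      assert (0 <= sqrt D2 / 3 < x - (1+a)/3) by lra. nra. }
  assert (Hgb: ga < be).
  { destruct (Rlt_dec ga be); auto. exfalso.
    rewrite S2_form, KD in HSb.
    assert (HH: (be - (1+a)/3)^2 > D2/9) by lra.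
    destruct (Rle_dec D2 0).
    - unfold ga in n. rewrite sqrt_neg_0 in n by auto. lra.
    - rewrite <- (pow2_sqrt D2) in HH by lra. unfold ga in n.
      assert (0 <= be - (1+a)/3 <= sqrt D2 / 3) by lra. nra. }
  set (M := Rmax ga ((1+a)/2)).
  assert (HM: ga <= M /\ (1+a)/2 <= M /\ M < be).
  { unfold M. split; [apply Rmax_l|]. split; [apply Rmax_r|]. apply Rmax_lub_lt; lra. }
  exists ((M + be)/2). split; [lra|]. split.
  - apply Hg; lra.
  - rewrite <- Hbe. apply hh_sdec. lra.
Qed.

Definition qA a A v := -(A^2 + A*v + v^2) + (1+a)*(A+v) - a.
Lemma g_diff a A v : g A a - g v a = (A - v) * qA a A v.
Proof. unfold g, qA. ring. Qed.
Lemma qA_le a A v : qA a A v <= S2 a A.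
Proof. assert (E: S2 a A - qA a A v = (v - (1+a-A)/2)^2) by (unfold S2, qA; field).
  pose proof (pow2_ge_0 (v - (1+a-A)/2)). lra. Qed.

Lemma ddiamond_lt k A a d :
  Rbar_lt (ddiamond k A a) (Finite d) <->
  exists x, 0 < x < d /\ forall v, 0 <= v <= A -> x * (k + 1) * (A - v) - g A a >= - g v a.
Proof. unfold ddiamond.
  set (E := fun d0 => 0 < d0 /\ forall v, 0 <= v <= A -> d0 * (k + 1) * (A - v) - g A a >= - g v a).
  destruct (Glb_Rbar_correct E) as [Hlb Hglb]. split.
  - intros Hl. destruct (Classical_Prop.classic (exists x, 0 < x < d /\ forall v, 0 <= v <= A -> x * (k + 1) * (A - v) - g A a >= - g v a)) as [|Hn]; auto.
    exfalso. assert (Rbar_le (Finite d) (Glb_Rbar E)).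
    { apply Hglb. intros x [Hx1 Hx2]. simpl. destruct (Rle_dec d x); auto.
      exfalso. apply Hn. exists x. split; [lra|auto]. }
    apply (Rbar_lt_not_le _ _ Hl H).
  - intros [x [Hx Hv]]. apply Rbar_le_lt_trans with (Finite x).
    apply Hlb. split; [lra|auto]. simpl; lra.
Qed.

Lemma hh_g a A : 0 < A -> g A a / A = hh a A.
Proof. intros. unfold g, hh. field. lra. Qed.

Lemma Dset_iff k a d : 0 < k -> (Dset_minus k a d <->
        (inH a d /\ a < a_star k /\ dmin a k < d /\ d < dmax a k)).
Proof. intros Hk. unfold Dset_minus. split.
  - intros [Hin [A [HA [Hdd Hg]]]]. destruct Hin as [Ha Hd].
    rewrite hh_g in Hg by lra.
    apply ddiamond_lt in Hdd. destruct Hdd as [x [Hx Hv]].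
    split; [split; auto|].
    destruct (Rlt_dec (1+a) (3*A)) as [Hc|Hc].
    + set (v0 := (1+a-A)/2).
      assert (Hv0: 0 <= v0 <= A) by (unfold v0; lra).
      pose proof (Hv v0 Hv0). pose proof (g_diff a A v0).
      assert (HH: (A - v0) * qA a A v0 <= (A - v0) * (x * (k+1))) by lra.
      assert (Hq: qA a A v0 = S2 a A) by (unfold v0, qA, S2; field).
      assert (S2 a A <= x * (k+1)).
      { assert (0 < A - v0) by (unfold v0; lra).
        apply (Rmult_le_reg_l (A - v0)); auto. rewrite <- Hq. lra. }
      apply (core_fwd k a d A); auto; try lra. nra.
    + assert (Hv0: 0 <= A/2 <= A) by lra.
      pose proof (Hv (A/2) Hv0). pose proof (g_diff a A (A/2)).
      assert (HH: (A - A/2) * qA a A (A/2) <= (A - A/2) * (x * (k+1))) by lra.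
      assert (Hq: S2 a (1+a-A) <= qA a A (A/2)).
      { assert (E: qA a A (A/2) - S2 a (1+a-A) = (A/2)*(1+a-2*A)) by (unfold qA, S2; field).
        assert (0 <= (A/2)*(1+a-2*A)) by (apply Rmult_le_pos; lra). lra. }
      assert (qA a A (A/2) <= x * (k+1)).
      { assert (0 < A - A/2) by lra.
        apply (Rmult_le_reg_l (A - A/2)); auto. }
      apply (core_fwd k a d (1+a-A)); auto; try lra. nra.
      replace (hh a (1+a-A)) with (hh a A) by (unfold hh; ring). auto.
  - intros [Hin [Has [H1 H2]]]. pose proof Hin as [Ha Hd].
    destruct (core_bwd k a d Hk ltac:(lra) Hd H1 H2) as [A [HA [HS Hh]]].
    split; auto. exists A. split; auto. split.
    + apply ddiamond_lt.
      set (M := Rmax 0 (S2 a A / (k+1))).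
      assert (HM1: 0 <= M) by apply Rmax_l.
      assert (HM2: S2 a A / (k+1) <= M) by apply Rmax_r.
      assert (HM3: M < d).
      { unfold M. apply Rmax_lub_lt; auto. apply (Rmult_lt_reg_r (k+1)); [lra|].
        field_simplify; lra. }
      exists ((M + d)/2). split; [lra|].
      intros v Hv. 
      assert (HX: S2 a A <= (M+d)/2 * (k+1)).
      { apply (Rmult_le_compat_r (k+1)) in HM2; [|lra]. field_simplify in HM2; [|lra]. nra. }
      pose proof (qA_le a A v). pose proof (g_diff a A v).
      assert (0 <= (A - v) * ((M + d) / 2 * (k + 1) - qA a A v)) by (apply Rmult_le_pos; lra).
      nra.
    + rewrite hh_g by lra. auto.
Qed.

Lemma dminus_val a : 0 <= a < 1 -> dminus a = (1-a)^2/4.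
Proof. intros Ha. unfold dminus.
  rewrite (is_lub_Rbar_unique _ (Finite ((1-a)^2/4))). reflexivity.
  split.
  - intros z [y [Hy ->]]. simpl. rewrite hh_g by lra. apply hh_max.
  - intros b Hb. apply Hb. exists ((1+a)/2). split; [lra|].
    rewrite hh_g by lra. unfold hh. field.
Qed.

Lemma part1 k a : 0 < k -> 0 <= a <= a_star k ->
  0 <= dmin a k /\ dmin a k <= dmax a k /\ dmax a k <= dminus a.
Proof. intros Hk Ha. pose proof (astar_bounds k Hk).
  pose proof (rnn k a Hk Ha) as Hr.
  destruct (tt_sq a k) as [T1 T2]; try lra.
  split; [|split].
  - rewrite <- hAp by lra. unfold hh.
    pose proof (Ap_ge k a Hk Hr ltac:(lra)).
    assert (Ap a k <= 1).
    { set (X := 2*k - a*(2*k+1)).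
      assert (HX: 0 <= X).
      { destruct (Rle_dec 0 X); auto. exfalso. unfold rr in Hr. unfold X in n. nra. }
      assert (HX2: 4 * tt a k ^2 <= X^2).
      { rewrite T1. unfold X, rr. nra. }
      assert (2 * tt a k <= X) by nra.
      unfold Ap. apply (Rmult_le_reg_r (4*k+1)); [lra|]. field_simplify; [|lra]. unfold X in H1. nra. }
    apply Rmult_le_pos; lra.
  - rewrite <- hAp by lra. destruct (Rlt_dec a (a_one k)) as [Hl|Hn].
    + rewrite dmax_then by auto. apply hh_max.
    + rewrite dmax_else by auto. rewrite <- hAm by lra. apply hh_dec.
      pose proof (Am_ge k a Hk ltac:(lra) Hn Hr). pose proof (Am_le_Ap k a Hk Hr). lra.
  - rewrite dminus_val by lra. apply dmax_le; auto.
Qed.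

Lemma part2 k : 0 < k -> dmax (a_star k) k = dmin (a_star k) k.
Proof. intros Hk. rewrite dmax_else by (apply astar_ge_aone; auto).
  unfold F2, dmin. fold (rr (a_star k) k). rewrite rr_astar, sqrt_0 by auto. field. lra. Qed.

Lemma dmax_eq a k : 0 < k -> 0 <= a <= a_star k -> dmax a k = hh a (Rmax (Am a k) ((1+a)/2)).
Proof. intros Hk Ha. pose proof (astar_bounds k Hk). pose proof (rnn k a Hk Ha) as Hr.
  destruct (Rlt_dec a (a_one k)) as [Hl|Hn].
  - rewrite dmax_then by auto. pose proof (Am_lt k a Hk ltac:(lra) Hl Hr).
    rewrite Rmax_right by lra. unfold hh. field.
  - rewrite dmax_else by auto. pose proof (Am_ge k a Hk ltac:(lra) Hn Hr).
    rewrite Rmax_left by lra. rewrite hAm; auto.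
Qed.


Ltac ct1 := match goal with
| |- continuous (fun x => ?c) _ => apply cConst
| |- continuous (fun x => fst x) _ => apply cFst
| |- continuous (fun x => snd x) _ => apply cSnd
| |- continuous (fun x => @?A x - @?B x) _ => apply (cMinus A B)
| |- continuous (fun x => @?A x + @?B x) _ => apply (cPlus A B)
| |- continuous (fun x => @?A x / @?B x) _ => apply (cDiv A B)
| |- continuous (fun x => @?A x * @?B x) _ => apply (cMult A B)
| |- continuous (fun x => - @?A x) _ => apply (cOpp A)
| |- continuous (fun x => / @?A x) _ => apply (cInv A)
| |- continuous (fun x => sqrt (@?A x)) _ => apply (cSqrt A)
| |- continuous (fun x => Rmax (@?A x) (@?B x)) _ => apply (cMax A B)
| |- continuous (fun x => (@?A x) ^ ?n) _ => apply (cPow A)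
end.
Ltac cont_tac := repeat ct1.
Lemma cont_dmin a k : 0 < k -> continuous (fun p : R*R => dmin (fst p) (snd p)) (a,k).
Proof. intros Hk. unfold dmin. cont_tac. all: simpl. intro E. assert (0 < (4*k+1)*((4*k+1)*1)) by (apply Rmult_lt_0_compat; lra). lra. Qed.
Lemma cont_dmax a k : 0 < k -> continuous (fun p : R*R => hh (fst p) (Rmax (Am (fst p) (snd p)) ((1+fst p)/2))) (a,k).
Proof. intros Hk. unfold hh, Am, tt, rr. cont_tac. all: simpl; lra. Qed.

Lemma part0 : cont_on2 dom_ak dmin /\ cont_on2 dom_ak dmax.
Proof. split.
  - intros a k [Hk Ha] eps He.
    destruct (cont_eps _ a k (cont_dmin a k Hk) eps He) as [de [Hde H]].
    exists de. split; auto. intros a' k' _ H1 H2. apply (H a' k' H1 H2).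
  - intros a k [Hk Ha] eps He.
    destruct (cont_eps _ a k (cont_dmax a k Hk) eps He) as [de [Hde H]].
    exists de. split; auto. intros a' k' [Hk' Ha'] H1 H2.
    rewrite (dmax_eq a k), (dmax_eq a' k') by auto. apply (H a' k' H1 H2).
Qed.

Theorem proposition2p9 :
  (cont_on2 dom_ak dmin /\ cont_on2 dom_ak dmax) /\
  (forall k, 0 < k ->
     (forall a, 0 <= a <= a_star k ->
        0 <= dmin a k /\ dmin a k <= dmax a k /\ dmax a k <= dminus a) /\
     dmax (a_star k) k = dmin (a_star k) k /\
     (forall a d, Dset_minus k a d <->
        (inH a d /\ a < a_star k /\ dmin a k < d /\ d < dmax a k))).
Proof.
  split. apply part0.
  intros k Hk. split; [|split].
  - intros a Ha. apply part1; auto.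
  - apply part2; auto.
  - intros a d. apply Dset_iff; auto.
Qed.
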